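(* Let $k$ be a field and $\mathcal{R}=\mathrm{RCFM}(k)$. There are short exact sequences (extensions) of right $\mathcal{R}$-modules $$0\to\mathcal{A}\to\mathcal{B}\to\mathcal{C}\to0\qquad\text{and}\qquad 0\to\mathcal{R}\to\mathcal{B}_\infty\to\mathcal{C}_\infty\to0.$$
   Context: $\mathcal{R}=\mathrm{RCFM}(k)$ is the $k$-algebra of $\mathbb{N}_0\times\mathbb{N}_0$ row-column-finite matrices over $k$. $\mathsf{A}$: $\mathsf{a}_{i+1,i}=1$ ($i\in\mathbb{N}_0$), other entries $0$; $\mathsf{B}$: $\mathsf{b}_{\frac{n(n+1)}{2}+i,\frac{(n-1)n}{2}+i}=1$ ($n>0$, $0\le i<n$), other entries $0$. $\mathcal{A}=\mathcal{R}/\mathsf{A}\mathcal{R}$, $\mathcal{B}=\mathcal{R}/(\mathsf{I}-\mathsf{A})\mathcal{R}$, $\mathcal{C}=\mathcal{R}/(\mathsf{I}-\mathsf{A}^t)\mathcal{R}$, $\mathcal{B}_\infty=\mathcal{R}/(\mathsf{I}-\mathsf{B})\mathcal{R}$, $\mathcal{C}_\infty=\mathcal{R}/(\mathsf{I}-\mathsf{B}^t)\mathcal{R}$. *)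

(* Defs.v *)
From HB Require Import structures.
From mathcomp Require Import all_boot all_order all_algebra.
From Stdlib Require Import ClassicalEpsilon.
Set Implicit Arguments. Unset Strict Implicit. Unset Printing Implicit Defensive.
Import GRing.Theory.
Local Open Scope ring_scope.

Section RCFM.
Variable k : fieldType.

(* N_0 x N_0 matrices over k, as functions (row index first). *)
Definition nmx := nat -> nat -> k.

Definition row_finite (M : nmx) : Prop :=
  forall i, exists N, forall j, (N <= j)%N -> M i j = 0.
Definition col_finite (M : nmx) : Prop :=
  forall j, exists N, forall i, (N <= i)%N -> M i j = 0.
Definition RCF (M : nmx) : Prop := row_finite M /\ col_finite M.

(* a bound beyond which row i of M vanishes (0 if none exists) *)
Definition rbound (M : nmx) (i : nat) : nat :=
  match excluded_middle_informative
          (exists N, forall j, (N <= j)%N -> M i j = 0) with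
  | left h => proj1_sig (constructive_indefinite_description _ h)
  | right _ => 0%N
  end.

(* matrix product (the sum (MN)_{ij} = sum_l M_{il} N_{lj} is finite
   since M is row-finite) *)
Definition nmxmul (M N : nmx) : nmx :=
  fun i j => \sum_(l < rbound M i) M i l * N l j.

Definition nmxadd (M N : nmx) : nmx := fun i j => M i j + N i j.
Definition nmxsub (M N : nmx) : nmx := fun i j => M i j - N i j.
Definition nmxtr (M : nmx) : nmx := fun i j => M j i.
Definition nmx0 : nmx := fun _ _ => 0.
Definition nmx1 : nmx := fun i j => if i == j then 1 else 0.

Definition mxA : nmx := fun i j => if i == j.+1 then 1 else 0.
(* B : b_{n(n+1)/2 + i, (n-1)n/2 + i} = 1 for n > 0, 0 <= i < n;
   note n(n+1)/2 = 'C(n.+1,2) and (n-1)n/2 = 'C(n,2), and such an n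
   satisfies n <= r for the row index r. *)
Definition mxB : nmx := fun r c =>
  if [exists n : 'I_r.+1, exists i : 'I_n,
        (0 < (n : nat))%N && (r == 'C(n.+1, 2) + i)%N && (c == 'C(n, 2) + i)%N]
  then 1 else 0.

Definition inRideal (x m : nmx) : Prop :=
  exists r, RCF r /\ forall i j, m i j = nmxmul x r i j.

(* m = n in the quotient right module R / xR *)
Definition eqmod (x m n : nmx) : Prop := inRideal x (nmxsub m n).

(* F : R -> R induces a homomorphism of right R-modules R/xR -> R/yR
   (F acts on representatives). *)
Definition quot_hom (x y : nmx) (F : nmx -> nmx) : Prop :=
  [/\ forall m, RCF m -> RCF (F m),
      forall m n, RCF m -> RCF n -> eqmod x m n -> eqmod y (F m) (F n),
      forall m n, RCF m -> RCF n -> eqmod y (F (nmxadd m n)) (nmxadd (F m) (F n))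
    & forall m r, RCF m -> RCF r -> eqmod y (F (nmxmul m r)) (nmxmul (F m) r)].

(* 0 -> R/xR --F--> R/yR --G--> R/zR -> 0 is a short exact sequence of
   right R-modules. *)
Definition short_exact (x y z : nmx) (F G : nmx -> nmx) : Prop :=
  [/\ quot_hom x y F, quot_hom y z G,
      forall m, RCF m -> inRideal y (F m) -> inRideal x m,
      (forall m, RCF m -> inRideal z (G (F m))) /\
      (forall n, RCF n -> inRideal z (G n) -> exists m, RCF m /\ eqmod y (F m) n)
    &
      forall n, RCF n -> exists m, RCF m /\ eqmod z (G m) n].

End RCFM.

(* Main.v *)
Require Import Defs.
From mathcomp Require Import all_boot all_order all_algebra.
From Stdlib Require Import ClassicalEpsilon Classical.
Set Implicit Arguments. Unset Strict Implicit. Unset Printing Implicit Defensive.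
Import GRing.Theory.
Local Open Scope ring_scope.

Lemma sum_trunc (k : fieldType) (f : nat -> k) K K' :
  (forall l, (K <= l)%N -> f l = 0) -> (K <= K')%N ->
  \sum_(l < K') f l = \sum_(l < K) f l.
Proof.
move=> Hf HK; rewrite -(big_mkord xpredT f) -(big_mkord xpredT f).
rewrite (big_cat_nat (leq0n K) HK) /= [X in _ + X]big1_seq ?addr0 //.
by move=> l /andP[_]; rewrite mem_iota => /andP[Hl _]; apply: Hf.
Qed.

Lemma mulE (k : fieldType) (M N : nmx k) i j K :
  (forall l, (K <= l)%N -> M i l = 0) -> nmxmul M N i j = \sum_(l < K) M i l * N l j.
Proof.
move=> HK; rewrite /nmxmul /rbound.
case: excluded_middle_informative => [h|nh]; last by exfalso; apply: nh; exists K.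
case: (constructive_indefinite_description _ h) => K0 HK0 /=.
have Hf : forall K1, (forall l, (K1 <= l)%N -> M i l = 0) ->
   forall l, (K1 <= l)%N -> M i l * N l j = 0 by move=> K1 H l Hl; rewrite H // mul0r.
transitivity (\sum_(l < maxn K K0) M i l * N l j).
  by symmetry; apply: (@sum_trunc _ (fun l => M i l * N l j)); [apply: Hf|rewrite leq_maxr].
by apply: (@sum_trunc _ (fun l => M i l * N l j)); [apply: Hf|rewrite leq_maxl].
Qed.

Lemma sum_delta (k : fieldType) (f : nat -> k) a K : (a < K)%N ->
  \sum_(l < K) (if (l : nat) == a then 1 else 0) * f l = f a.
Proof.
move=> aK; rewrite (bigD1 (Ordinal aK)) //= eqxx mul1r big1 ?addr0 // => l hl.
have -> : ((l : nat) == a) = false.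
  by apply/negbTE; apply: contra hl => /eqP e; apply/eqP; apply: val_inj.
by rewrite mul0r.
Qed.
Record shiftP (k : fieldType) (s : nat -> nat) (x : nmx k) : Prop := ShiftP {
  s_gt : forall c, (c < s c)%N;
  s_inj : injective s;
  xE : forall i c, x i c = if s c == i then 1 else 0 }.

Lemma zero_ideal (k : fieldType) (y w : nmx k) : (forall i j, w i j = 0) -> inRideal y w.
Proof.
move=> Hw; exists (nmx0 k); split.
  by split=> i; exists 0%N => j _.
by move=> i j; rewrite Hw /nmxmul big1 // => l _; rewrite /nmx0 mulr0.
Qed.

Lemma mul0E (k : fieldType) (r : nmx k) i j : nmxmul (nmx0 k) r i j = 0.
Proof. by rewrite /nmxmul big1 // => l _; rewrite /nmx0 mul0r. Qed.


Lemma mulx_pre (k : fieldType) s x (H : @shiftP k s x) (r : nmx k) c i j :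
  s c = i -> nmxmul x r i j = r c j.
Proof.
move=> Hc; rewrite (@mulE _ _ _ _ _ i).
  rewrite -(@sum_delta _ (fun l => r l j) c i); last by rewrite -Hc (s_gt H).
  apply: eq_bigr => l _; rewrite (xE H).
  by have -> : (s l == i) = ((l : nat) == c) by rewrite -[X in s l == X]Hc (inj_eq (s_inj H)).
by move=> l Hl; rewrite (xE H); case: eqP => // e; move: (s_gt H l); rewrite e ltnNge Hl.
Qed.

Lemma mulx_nopre (k : fieldType) s x (H : @shiftP k s x) (r : nmx k) i j :
  (forall c, s c <> i) -> nmxmul x r i j = 0.
Proof.
move=> Hc; rewrite (@mulE _ _ _ _ _ 0) ?big_ord0 // => l _.
by rewrite (xE H); case: eqP => // /Hc.
Qed.

Lemma xrow (k : fieldType) s x (H : @shiftP k s x) i l : (i <= l)%N -> x i l = 0.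
Proof.
by move=> Hl; rewrite (xE H); case: eqP => // e; move: (s_gt H l); rewrite e ltnNge Hl.
Qed.

Lemma mulIx (k : fieldType) s x (H : @shiftP k s x) (r : nmx k) i j :
  nmxmul (nmxsub (nmx1 k) x) r i j = r i j - nmxmul x r i j.
Proof.
rewrite (@mulE _ _ _ _ _ i.+1); last first.
  move=> l Hl; rewrite /nmxsub /nmx1 (xrow H) ?(ltnW Hl) //.
  by case: eqP => [e|]; [move: Hl; rewrite e ltnn|rewrite subr0].
rewrite (@mulE _ x _ _ _ i.+1); last by move=> l Hl; rewrite (xrow H) // ltnW.
rewrite /nmxsub; under eq_bigr do rewrite mulrBl; rewrite sumrB.
congr (_ - _); rewrite -(@sum_delta _ (fun l => r l j) i i.+1) //.
by apply: eq_bigr => l _; rewrite /nmx1 eq_sym.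
Qed.

Lemma mulIxt (k : fieldType) s x (H : @shiftP k s x) (r : nmx k) i j :
  nmxmul (nmxsub (nmx1 k) (nmxtr x)) r i j = r i j - r (s i) j.
Proof.
rewrite (@mulE _ _ _ _ _ (s i).+1); last first.
  move=> l Hl; rewrite /nmxsub /nmx1 /nmxtr (xE H).
  have h1 : (i == l) = false by apply/negbTE; rewrite neq_ltn (ltn_trans (s_gt H i) Hl).
  have h2 : (s i == l) = false by apply/negbTE; rewrite neq_ltn Hl.
  by rewrite h1 h2 subr0.
rewrite /nmxsub; under eq_bigr do rewrite mulrBl; rewrite sumrB.
congr (_ - _).
  rewrite -(@sum_delta _ (fun l => r l j) i (s i).+1) ?(ltn_trans (s_gt H i)) //.
  by apply: eq_bigr => l _; rewrite /nmx1 eq_sym.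
rewrite -(@sum_delta _ (fun l => r l j) (s i) (s i).+1) //.
by apply: eq_bigr => l _; rewrite /nmxtr (xE H) eq_sym.
Qed.
Record startP (s : nat -> nat) (stinv : nat -> option nat) (st : nat -> nat) : Prop := StartP {
  st1 : forall i q, stinv i = Some q -> forall c, s c <> i;
  st2 : forall i, stinv i = None -> exists c, s c = i;
  st3 : forall i q, stinv i = Some q -> st q = i;
  st5 : forall q, (q <= st q)%N }.

Definition Fm (k : fieldType) (stinv : nat -> option nat) (m : nmx k) : nmx k :=
  fun i j => match stinv i with Some q => m q j | None => 0 end.

Lemma RCF_opp (k : fieldType) (r : nmx k) : RCF r -> RCF (fun i j => - r i j).
Proof.
case=> [Hr Hc]; split=> i; [case: (Hr i)|case: (Hc i)] => N HN; exists N => j /HN ->;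
  by rewrite oppr0.
Qed.

Lemma max_bound (f : nat -> nat) N q : (q < N)%N -> (f q < (\max_(c < N) f c).+1)%N.
Proof. by move=> h; rewrite ltnS (leq_bigmax (Ordinal h)). Qed.

Lemma RCF_xr (k : fieldType) s x (H : @shiftP k s x) (r : nmx k) :
  RCF r -> RCF (fun i j => nmxmul x r i j).
Proof.
case=> [Hr Hc]; split=> i.
  case: (classic (exists c, s c = i)) => [[c Hci]|nc].
    case: (Hr c) => N HN; exists N => j Hj; rewrite (mulx_pre H _ _ Hci) HN //.
  by exists 0%N => j _; rewrite (mulx_nopre H) // => c e; apply: nc; exists c.
case: (Hc i) => N HN; exists (\max_(c < N) s c).+1 => l Hl.
case: (classic (exists c, s c = l)) => [[c Hci]|nc].
  rewrite (mulx_pre H _ _ Hci) HN //; rewrite leqNgt; apply/negP => cN.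
  by move: (max_bound s cN); rewrite Hci ltnNge Hl.
by rewrite (mulx_nopre H) // => c e; apply: nc; exists c.
Qed.

Lemma RCF_xtr (k : fieldType) s x (H : @shiftP k s x) (r : nmx k) :
  RCF r -> RCF (fun i j => r (s i) j).
Proof.
case=> [Hr Hc]; split=> i; first by case: (Hr (s i)) => N HN; exists N.
case: (Hc i) => N HN; exists N => l Hl; apply: HN.
exact: leq_trans Hl (ltnW (s_gt H l)).
Qed.

Lemma RCF_Fm (k : fieldType) s stinv st (S : startP s stinv st) (m : nmx k) :
  RCF m -> RCF (Fm stinv m).
Proof.
case=> [Hr Hc]; split=> i.
  rewrite /Fm; case: (stinv i) => [q|]; last by exists 0%N.
  by case: (Hr q) => N HN; exists N.
case: (Hc i) => N HN; exists (\max_(c < N) st c).+1 => l Hl; rewrite /Fm.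
case E: (stinv l) => [q|] //; apply: HN; rewrite leqNgt; apply/negP => qN.
by move: (max_bound st qN); rewrite (st3 S E) ltnNge Hl.
Qed.

Lemma incl (k : fieldType) s x (H : @shiftP k s x) (m : nmx k) :
  inRideal (nmxsub (nmx1 k) x) m -> inRideal (nmxsub (nmx1 k) (nmxtr x)) m.
Proof.
case=> r [Rr Hm]; exists (fun i j => - nmxmul x r i j); split.
  exact: RCF_opp (RCF_xr H Rr).
move=> i j; rewrite (mulIxt H) Hm (mulIx H) (mulx_pre H r j (erefl (s i))).
by rewrite opprK addrC.
Qed.
Lemma quot_G (k : fieldType) s x (H : @shiftP k s x) :
  quot_hom (nmxsub (nmx1 k) x) (nmxsub (nmx1 k) (nmxtr x)) (fun m => m).
Proof.
split=> //.
- by move=> m n _ _; exact: (incl H).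
- by move=> m n _ _; apply: zero_ideal => i j; rewrite /nmxsub subrr.
- by move=> m n _ _; apply: zero_ideal => i j; rewrite /nmxsub subrr.
Qed.

Lemma iter_ge s (Hs : forall c, (c < s c)%N) n i : (n <= iter n s i)%N.
Proof.
elim: n => //= n IH; exact: leq_ltn_trans IH (Hs _).
Qed.

Lemma inj_gen (k : fieldType) s x (H : @shiftP k s x) stinv st (S : startP s stinv st)
  (m : nmx k) i q j :
  inRideal (nmxsub (nmx1 k) x) (Fm stinv m) -> stinv i = Some q -> m q j = 0.
Proof.
case=> r [[_ Rc] Hm] Ei.
have key : forall n, r (iter n s i) j = m q j.
  elim=> [|n IH] /=.
    have h0 := mulx_nopre H r j (st1 S Ei).
    by move: (Hm i j); rewrite /Fm Ei (mulIx H) h0 subr0.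
  move: (Hm (s (iter n s i)) j); rewrite /Fm (mulIx H) (mulx_pre H _ _ (erefl _)) IH.
  case E: (stinv (s (iter n s i))) => [q'|].
    by case: (st1 S E (erefl _)).
  by move/eqP; rewrite eq_sym subr_eq0 => /eqP.
case: (Rc j) => N HN; rewrite -(key N); apply: HN; exact: iter_ge (s_gt H) _ _.
Qed.

Lemma imF (k : fieldType) s x (H : @shiftP k s x) stinv st (S : startP s stinv st)
  (m : nmx k) : RCF m -> inRideal (nmxsub (nmx1 k) (nmxtr x)) (Fm stinv m).
Proof.
move=> Rm; exists (Fm stinv m); split; first exact (RCF_Fm S Rm).
move=> i j; rewrite (mulIxt H) {3}/Fm.
case E: (stinv (s i)) => [q|]; last by rewrite subr0.
by case: (st1 S E (erefl (s i))).
Qed.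

Lemma kerG (k : fieldType) s x (H : @shiftP k s x) stinv st (S : startP s stinv st)
  (n : nmx k) : RCF n -> inRideal (nmxsub (nmx1 k) (nmxtr x)) n ->
  exists m, RCF m /\ eqmod (nmxsub (nmx1 k) x) (Fm stinv m) n.
Proof.
move=> _ [r' [Rr' Hn]]; exists (fun q j => r' (st q) j); split.
  case: Rr' => [Rr Rc]; split=> i; first by case: (Rr (st i)) => N HN; exists N.
  case: (Rc i) => N HN; exists N => l Hl; apply: HN; exact: leq_trans Hl (st5 S l).
exists (fun i j => r' (s i) j); split; first exact (RCF_xtr H Rr').
move=> i j; rewrite /nmxsub Hn (mulIxt H) (mulIx H) /Fm.
case E: (stinv i) => [q|].
  rewrite (st3 S E) (mulx_nopre H); last exact (fun c => st1 S E (c:=c)).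
  by rewrite subr0 opprB addrC subrK.
case: (st2 S E) => c Hc; rewrite (mulx_pre H _ _ Hc) -Hc.
by rewrite sub0r opprB.
Qed.

Lemma Fm_quot (k : fieldType) s x (H : @shiftP k s x) stinv st (S : startP s stinv st)
  (x0 : nmx k) :
  (forall m n, RCF m -> RCF n -> eqmod x0 m n ->
     forall i q j, stinv i = Some q -> m q j = n q j) ->
  quot_hom x0 (nmxsub (nmx1 k) x) (Fm stinv).
Proof.
move=> Heq; split.
- by move=> m Rm; exact (RCF_Fm S Rm).
- move=> m n Rm Rn E; apply: zero_ideal => i j; rewrite /nmxsub /Fm.
  case Ei: (stinv i) => [q|]; last by rewrite subrr.
  by rewrite (Heq m n Rm Rn E i q j Ei) subrr.
- move=> m n _ _; apply: zero_ideal => i j; rewrite /nmxsub /nmxadd /Fm.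
  by case: (stinv i) => [q|]; rewrite ?addr0 ?subrr.
- move=> m r [Rm _] _; apply: zero_ideal => i j; rewrite /nmxsub /Fm.
  case Ei: (stinv i) => [q|].
    case: (Rm q) => N HN.
    rewrite (@mulE _ m r q j N) // (@mulE _ (Fm stinv m) r i j N); last first.
      by move=> l Hl; rewrite /Fm Ei HN.
    by rewrite /Fm Ei subrr.
  rewrite (@mulE _ (Fm stinv m) r i j 0) ?big_ord0 ?subrr // => l _.
  by rewrite /Fm Ei.
Qed.

Lemma exact_gen (k : fieldType) s x (H : @shiftP k s x) stinv st (S : startP s stinv st)
  (x0 : nmx k) :
  (forall m n, RCF m -> RCF n -> eqmod x0 m n ->
     forall i q j, stinv i = Some q -> m q j = n q j) ->
  (forall m, RCF m -> (forall i q j, stinv i = Some q -> m q j = 0) -> inRideal x0 m) ->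
  short_exact x0 (nmxsub (nmx1 k) x) (nmxsub (nmx1 k) (nmxtr x)) (Fm stinv) (fun m => m).
Proof.
move=> Heq Hinj; split.
- exact (Fm_quot H S Heq).
- exact (quot_G H).
- move=> m Rm Hy; apply: Hinj => // i q j Ei; exact (inj_gen H S j Hy Ei).
- split; first by move=> m Rm; exact (imF H S Rm).
  by move=> n Rn Hn; exact (kerG H S Rn Hn).
- move=> n Rn; exists n; split => //; apply: zero_ideal => i j; by rewrite /nmxsub subrr.
Qed.
Lemma shiftA (k : fieldType) : shiftP (fun c => c.+1) (mxA k).
Proof.
split=> //; first by move=> a b [].
by move=> i c; rewrite /mxA eq_sym.
Qed.

Definition stinvA (i : nat) : option nat := if i == 0%N then Some 0%N else None.

Lemma startA : startP (fun c => c.+1) stinvA (fun q => q).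
Proof.
split.
- by move=> i q; rewrite /stinvA; case: eqP => // -> _ c.
- by move=> [|i] //= _; exists i.
- by move=> i q; rewrite /stinvA; case: eqP => // -> [].
- by [].
Qed.

Lemma seqA (k : fieldType) :
  exists F G : nmx k -> nmx k,
      short_exact (mxA k) (nmxsub (nmx1 k) (mxA k))
                  (nmxsub (nmx1 k) (nmxtr (mxA k))) F G.
Proof.
exists (Fm stinvA), (fun m => m); apply: (exact_gen (shiftA k) startA).
- move=> m n _ _ [r [_ Hr]] i q j; rewrite /stinvA; case: eqP => // _ [<-].
  move: (Hr 0%N j); rewrite (mulx_nopre (shiftA k)) // /nmxsub.
  by move/eqP; rewrite subr_eq0 => /eqP.
- move=> m [Rr Rc] Hm; exists (fun i j => m i.+1 j); split.
    split=> i; first by case: (Rr i.+1) => N HN; exists N.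
    by case: (Rc i) => N HN; exists N => l Hl; apply: HN; apply: leqW.
  move=> [|i] j.
    by rewrite (mulx_nopre (shiftA k)) // (Hm 0%N 0%N).
  by rewrite (mulx_pre (shiftA k) _ _ (erefl i.+1)).
Qed.
From mathcomp Require Import zify.

Lemma triS n : 'C(n.+2, 2) = ('C(n.+1, 2) + n.+1)%N.
Proof. by rewrite binS bin1. Qed.

Fixpoint blk (c : nat) : nat :=
  match c with
  | 0 => 0
  | c'.+1 => if c'.+1 == 'C((blk c').+2, 2) then (blk c').+1 else blk c'
  end.

Lemma blk_inv c : ('C((blk c).+1, 2) <= c < 'C((blk c).+2, 2))%N.
Proof.
elim: c => [|c IH] //=.
case: eqP => [e|ne].
  by rewrite (triS (blk c).+1) -e; lia.
by move: IH ne; lia.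
Qed.

Lemma blk_uniq b b' c : ('C(b.+1, 2) <= c < 'C(b.+2, 2))%N ->
  ('C(b'.+1, 2) <= c < 'C(b'.+2, 2))%N -> b = b'.
Proof.
move=> /andP[h1 h2] /andP[h1' h2'].
case: (ltngtP b b') => // h.
  have := leq_bin2l 2 (h : (b.+2 <= b'.+1)%N); lia.
have := leq_bin2l 2 (h : (b'.+2 <= b.+1)%N); lia.
Qed.

Lemma blk_eq b c : ('C(b.+1, 2) <= c < 'C(b.+2, 2))%N -> blk c = b.
Proof. by move=> h; apply: (blk_uniq (blk_inv c) h). Qed.

Definition sB (c : nat) : nat := (c + (blk c).+1)%N.

Lemma blk_sB c : blk (sB c) = (blk c).+1.
Proof.
apply: blk_eq; move: (blk_inv c); rewrite /sB !triS; lia.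
Qed.

Lemma shiftB (k : fieldType) : shiftP sB (mxB k).
Proof.
split.
- by move=> c; rewrite /sB; lia.
- move=> a b e; have eb : blk a = blk b.
    by apply: succn_inj; rewrite -!blk_sB e.
  by move: e; rewrite /sB eb; lia.
- move=> r c; rewrite /mxB; congr (if _ then _ else _).
  apply/idP/idP.
  + case/existsP => n /existsP [i /andP[/andP[n0 /eqP er] /eqP ec]].
    case: n i n0 er ec => [[|n] Hn] //= [i Hi] /= _ er ec.
    have bc : blk c = n.
      apply: blk_eq; rewrite ec triS; move: Hi; lia.
    by apply/eqP; rewrite /sB bc er ec triS; lia.
  + move/eqP=> e; have Hn : ((blk c).+1 < r.+1)%N by rewrite -e /sB; lia.
    have Hi : (c - 'C((blk c).+1, 2) < (blk c).+1)%N.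
      by move: (blk_inv c); rewrite triS; lia.
    apply/existsP; exists (Ordinal Hn); apply/existsP; exists (Ordinal Hi) => /=.
    by move: (blk_inv c); rewrite -e /sB triS; lia.
Qed.

Definition stinvB (i : nat) : option nat :=
  if (i - 'C((blk i).+1, 2) == blk i)%N then Some (blk i) else None.
Definition stB (q : nat) : nat := ('C(q.+1, 2) + q)%N.

Lemma blk_stB q : blk (stB q) = q.
Proof. by apply: blk_eq; rewrite /stB triS; lia. Qed.

Lemma startB : startP sB stinvB stB.
Proof.
split.
- move=> i q; rewrite /stinvB; case: eqP => // h _ c e.
  move: h; rewrite -e blk_sB; move: (blk_inv c); rewrite /sB !triS; lia.
- move=> i; rewrite /stinvB; case: eqP => // h _.
  move: (blk_inv i) h; case E: (blk i) => [|b].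
    by have -> : 'C(1, 2) = 0%N by []; have -> : 'C(2, 2) = 1%N by []; lia.
  move=> hi h; exists ('C(b.+1, 2) + (i - 'C(b.+2, 2)))%N.
  have bc : blk ('C(b.+1, 2) + (i - 'C(b.+2, 2)))%N = b.
    by apply: blk_eq; move: hi h; rewrite !triS; lia.
  by rewrite /sB bc; move: hi h; rewrite !triS; lia.
- move=> i q; rewrite /stinvB; case: eqP => // h [<-].
  by rewrite /stB; move: (blk_inv i) h; lia.
- by move=> q; rewrite /stB; lia.
Qed.

Lemma stinvB_st q : stinvB (stB q) = Some q.
Proof.
rewrite /stinvB blk_stB /stB; case: eqP => //; lia.
Qed.

Lemma seqB (k : fieldType) :
  exists F G : nmx k -> nmx k,
      short_exact (nmx0 k) (nmxsub (nmx1 k) (mxB k))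
                  (nmxsub (nmx1 k) (nmxtr (mxB k))) F G.
Proof.
exists (Fm stinvB), (fun m => m); apply: (exact_gen (shiftB k) startB).
- move=> m n _ _ [r [_ Hr]] i q j _.
  by move: (Hr q j); rewrite mul0E /nmxsub => /eqP; rewrite subr_eq0 => /eqP.
- move=> m _ Hm; apply: zero_ideal => i j.
  exact: (Hm (stB i) i j (stinvB_st i)).
Qed.

Theorem proposition7p11 (k : fieldType) :
  (exists F G : nmx k -> nmx k,
      short_exact (mxA k) (nmxsub (nmx1 k) (mxA k))
                  (nmxsub (nmx1 k) (nmxtr (mxA k))) F G) /\
  (exists F G : nmx k -> nmx k,
      short_exact (nmx0 k) (nmxsub (nmx1 k) (mxB k))
                  (nmxsub (nmx1 k) (nmxtr (mxB k))) F G).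
Proof. split; [exact: seqA | exact: seqB]. Qed.
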